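(* Let $A\in\mathbb{R}^{n\times n}$, $T>0$, $\Omega=c+G\mathbf{B}_p\in\mathbb{A}_n$, $\epsilon\in[0,1)$, and $t\in[0,T]$ with $t\|A\|\le1$. Then $$\mathfrak{d}\bigl(\mathcal{H}(t,\Omega,\epsilon),\mathrm{e}^{tA}\Omega\bigr)\le\bigl(2(1-\epsilon)+(t\|A\|)^2\bigr)\mathrm{e}^{T\|A\|}\|\Omega\|.$$
   Context: A norm $\|\cdot\|$ is fixed on each $\mathbb{R}^k$, $\mathbf{B}_k$ its closed unit ball, matrices with induced norms; for a nonempty set $M$, $\|M\|=\sup_{x\in M}\|x\|$. $\mathfrak{d}$ is the Hausdorff distance w.r.t. $\|\cdot\|$. $G^\dagger$ is the Moore–Penrose inverse, $\rho(A)$ the spectral radius. $\mathbb{A}_n$: sets $c+G\mathbf{B}_p$ with $\mathrm{rank}(G)=n$, $G\in\mathbb{R}^{n\times p}$, regarded with representation $(c,G)$. $\mathcal{L}(t,k)=\sum_{j=0}^{k-1}(tA)^j/j!$, $\theta(r,k)=\sum_{j=k}^\infty r^j/j!$, $\lambda(t,\Omega,k)=\dfrac{1-\mathrm{e}^{t\|A\|}\theta(t\|A\|,k)\|G^\dagger\|\|c\|}{1+\mathrm{e}^{t\|A\|}\theta(t\|A\|,k)\|G^\dagger\|\|G\|}$, $k_{\min}(t)=\min\{k\in\mathbb{N}:\theta(t\rho(A),k)\mathrm{e}^{t\rho(A)}<1\}$, $\kappa(t,\Omega,\epsilon)=\min\{k\in\mathbb{N}:k\ge\max(k_{\min}(t),2),\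 \lambda(t,\Omega,k)>\epsilon\}$, and $\mathcal{H}(t,\Omega,\epsilon)=\mathcal{L}(t,\kappa)[c+\lambda(t,\Omega,\kappa)G\mathbf{B}_p]$ with $\kappa=\kappa(t,\Omega,\epsilon)$. *)

(* Defs.v *)
From HB Require Import structures.
From mathcomp Require Import all_boot all_order all_algebra.
From mathcomp Require Import all_classical all_reals all_analysis.
From mathcomp Require Import complex.
Set Implicit Arguments. Unset Strict Implicit. Unset Printing Implicit Defensive.
Import Order.TTheory GRing.Theory Num.Theory.
Import numFieldNormedType.Exports.
Local Open Scope classical_set_scope.
Local Open Scope ring_scope.

Section Defs.
Variable R : realType.

Definition norm_family (nrm : forall k, 'cV[R]_k -> R) : Prop :=
  forall k,
    (forall x : 'cV[R]_k, nrm k x = 0 -> x = 0) /\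
    (forall (a : R) (x : 'cV[R]_k), nrm k (a *: x) = `|a| * nrm k x) /\
    (forall x y : 'cV[R]_k, nrm k (x + y) <= nrm k x + nrm k y).

Definition unit_ball (nrm : forall k, 'cV[R]_k -> R) (k : nat) : set 'cV[R]_k :=
  [set x | nrm k x <= 1].

Definition opnorm (nrm : forall k, 'cV[R]_k -> R) m k (M : 'M[R]_(m, k)) : R :=
  sup [set nrm m (M *m x) | x in @unit_ball nrm k].

Definition setnorm (nrm : forall k, 'cV[R]_k -> R) m (X : set 'cV[R]_m) : R :=
  sup [set nrm m x | x in X].

Definition hdist (nrm : forall k, 'cV[R]_k -> R) m (X Y : set 'cV[R]_m) : R :=
  Num.max (sup [set inf [set nrm m (x - y) | y in Y] | x in X])
          (sup [set inf [set nrm m (x - y) | x in X] | y in Y]).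

Definition is_MP_inverse m k (G : 'M[R]_(m, k)) (X : 'M[R]_(k, m)) : Prop :=
  [/\ G *m X *m G = G, X *m G *m X = X, (G *m X)^T = G *m X & (X *m G)^T = X *m G].

Definition spectral_radius n (A : 'M[R]_n) : R :=
  sup [set Normc.normc z | z in
        [set z : R[i] | root (map_poly (real_complex R) (char_poly A)) z]].

Definition expmx n (M : 'M[R]_n) : 'M[R]_n :=
  limn (fun N => \sum_(j < N) (j`!%:R)^-1 *: M ^+ j).

Definition Lpoly n (A : 'M[R]_n) (t : R) (k : nat) : 'M[R]_n :=
  \sum_(j < k) (j`!%:R)^-1 *: (t *: A) ^+ j.

Definition theta (r : R) (k : nat) : R :=
  limn (fun N => \sum_(k <= j < N) r ^+ j / j`!%:R).

(* lambda(t, Omega, k) with Omega = c + G B_p and Gd = G^dagger *)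
Definition lambda (nrm : forall k, 'cV[R]_k -> R) n p (A : 'M[R]_n)
    (c : 'cV[R]_n) (G : 'M[R]_(n, p)) (Gd : 'M[R]_(p, n)) (t : R) (k : nat) : R :=
  let a := opnorm nrm A in
  (1 - expR (t * a) * theta (t * a) k * opnorm nrm Gd * nrm n c) /
  (1 + expR (t * a) * theta (t * a) k * opnorm nrm Gd * opnorm nrm G).

Definition nat_min (P : set nat) : nat :=
  xget 0%N [set k | P k /\ forall j, P j -> (k <= j)%N].

Definition kmin n (A : 'M[R]_n) (t : R) : nat :=
  nat_min [set k | theta (t * spectral_radius A) k * expR (t * spectral_radius A) < 1].

Definition kappa (nrm : forall k, 'cV[R]_k -> R) n p (A : 'M[R]_n)
    (c : 'cV[R]_n) (G : 'M[R]_(n, p)) (Gd : 'M[R]_(p, n)) (t eps : R) : nat :=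
  nat_min [set k | (maxn (kmin A t) 2 <= k)%N /\ eps < lambda nrm A c G Gd t k].

Definition zono (nrm : forall k, 'cV[R]_k -> R) n p (c : 'cV[R]_n) (G : 'M[R]_(n, p))
  : set 'cV[R]_n := [set c + G *m b | b in @unit_ball nrm p].

Definition mximage n m (M : 'M[R]_(m, n)) (X : set 'cV[R]_n) : set 'cV[R]_m :=
  [set M *m x | x in X].

Definition Hset (nrm : forall k, 'cV[R]_k -> R) n p (A : 'M[R]_n)
    (c : 'cV[R]_n) (G : 'M[R]_(n, p)) (Gd : 'M[R]_(p, n)) (t eps : R) : set 'cV[R]_n :=
  let k := kappa nrm A c G Gd t eps in
  mximage (Lpoly A t k) (zono nrm c (lambda nrm A c G Gd t k *: G)).

End Defs.

(* Main.v *)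
Require Import Defs.
From HB Require Import structures.
From mathcomp Require Import all_boot all_order all_algebra.
From mathcomp Require Import all_classical all_reals all_analysis.
From mathcomp Require Import lra ring.

Import Order.TTheory GRing.Theory Num.Theory.
Import numFieldNormedType.Exports.
Local Open Scope classical_set_scope.
Local Open Scope ring_scope.

Section Basic.
Variable R : realType.
Variable nrm : forall k, 'cV[R]_k -> R.
Hypothesis Hn : norm_family nrm.
Set Implicit Arguments. Unset Strict Implicit.

Lemma nrm_eq0 k (x : 'cV[R]_k) : nrm k x = 0 -> x = 0.
Proof. by have [h _] := Hn k; apply: h. Qed.
Lemma nrmZ k a (x : 'cV[R]_k) : nrm k (a *: x) = `|a| * nrm k x.
Proof. by have [_ [h1 h2]] := Hn k; auto. Qed.
Lemma nrmD k (x y : 'cV[R]_k) : nrm k (x + y) <= nrm k x + nrm k y.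
Proof. by have [_ [h1 h2]] := Hn k; auto. Qed.
Lemma nrm0 k : nrm k 0 = 0.
Proof. by rewrite -(scale0r (0 : 'cV[R]_k)) nrmZ normr0 mul0r. Qed.
Lemma nrmN k (x : 'cV[R]_k) : nrm k (- x) = nrm k x.
Proof. by rewrite -scaleN1r nrmZ normrN1 mul1r. Qed.
Lemma nrm_ge0 k (x : 'cV[R]_k) : 0 <= nrm k x.
Proof.
have := nrmD x (- x); rewrite subrr nrm0 nrmN => h.
by rewrite -(@pmulr_rge0 _ 2) // mulr2n mulrDl mul1r.
Qed.
Lemma nrmB k (x y : 'cV[R]_k) : nrm k (x - y) <= nrm k x + nrm k y.
Proof. by rewrite -(nrmN y); apply: nrmD. Qed.
Lemma nrm_sum k I (r : seq I) (F : I -> 'cV[R]_k) :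
  nrm k (\sum_(i <- r) F i) <= \sum_(i <- r) nrm k (F i).
Proof.
elim: r => [|a r IH]; first by rewrite !big_nil nrm0.
rewrite !big_cons; apply: le_trans (nrmD _ _) _; exact: lerD.
Qed.


Lemma mxnorm_entry m k (M : 'M[R]_(m, k)) i j : `|M i j| <= `|M|.
Proof.
rewrite [X in _ <= X]/Num.norm /= mx_normrE.
exact: (le_bigmax _ (fun ij : 'I_m * 'I_k => `|M ij.1 ij.2|) (i, j)).
Qed.

Lemma mxnorm_le m k (M : 'M[R]_(m, k)) B :
  0 <= B -> (forall i j, `|M i j| <= B) -> `|M| <= B.
Proof.
move=> B0 h; rewrite [X in X <= _]/Num.norm /= mx_normrE.
by apply/bigmax_leP; split => // -[i j] _; apply: h.
Qed.

Lemma mxnorm_tr m k (M : 'M[R]_(m, k)) : `|M^T| = `|M|.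
Proof.
apply/le_anti/andP; split; apply: mxnorm_le => // i j; rewrite ?mxE.
- exact: mxnorm_entry.
- by have := mxnorm_entry M^T j i; rewrite mxE.
Qed.

Definition Cup k := \sum_(i < k) nrm k (delta_mx i (0 : 'I_1) : 'cV[R]_k).

Lemma Cup_ge0 k : 0 <= Cup k.
Proof. by apply: sumr_ge0 => i _; apply: nrm_ge0. Qed.

Lemma nrm_up k (x : 'cV[R]_k) B : (forall i, `|x i 0| <= B) -> nrm k x <= Cup k * B.
Proof.
move=> h; rewrite {1}(matrix_sum_delta x).
under eq_bigr => i _ do rewrite big_ord1.
apply: le_trans (nrm_sum _ _) _.
rewrite /Cup mulr_suml; apply: ler_sum => i _.
rewrite nrmZ mulrC; apply: ler_wpM2l; first exact: nrm_ge0.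
by have := h i; rewrite (ord1 (0 : 'I_1)).
Qed.

Lemma nrm_upN k (x : 'cV[R]_k) : nrm k x <= Cup k * `|x|.
Proof. by apply: nrm_up => i; apply: mxnorm_entry. Qed.


Lemma nrm_dist k (a b : 'cV[R]_k) : `|nrm k a - nrm k b| <= nrm k (a - b).
Proof.
rewrite ler_norml; apply/andP; split.
- rewrite lerBrDl; have := nrmD (a - b) b; rewrite subrK => h.
  have -> : nrm k (a - b) = nrm k (b - a) by rewrite -nrmN opprB.
  have := nrmD (b - a) a; rewrite subrK. lra.
- have := nrmD (a - b) b; rewrite subrK; lra.
Qed.

Lemma nrm_low k : exists2 c, 0 < c & forall x : 'cV[R]_k, c * `|x| <= nrm k x.
Proof.
case: k => [|k].
  exists 1 => // x; have -> : x = 0 by apply/matrixP => -[].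
  by rewrite normr0 mulr0 nrm0.
pose f (v : 'rV[R]_k.+1) := nrm k.+1 v^T.
pose S := [set v : 'rV[R]_k.+1 | `|v| = 1].
have cf : continuous f.
  move=> v; apply/(@cvgrPdist_lt _ _ _ (nbhs v) _ f (f v)) => e e0.
  have C0 := Cup_ge0 k.+1.
  apply/nbhs_ballP; exists (e / (Cup k.+1 + 1)) => /=.
    by apply: divr_gt0 => //; lra.
  move=> w; rewrite -ball_normE /= => vw.
  apply: le_lt_trans (nrm_dist _ _) _.
  rewrite -linearB /=; apply: le_lt_trans (nrm_upN _) _.
  rewrite mxnorm_tr.
  have : Cup k.+1 * `|v - w| <= Cup k.+1 * (e / (Cup k.+1 + 1)).
    by apply: ler_wpM2l => //; apply: ltW.
  move=> h; apply: le_lt_trans h _.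
  rewrite mulrA ltr_pdivrMr; last lra.
  nra.
have cS : compact S.
  apply: bounded_closed_compact.
    change (\forall M \near +oo, forall w, S w -> `|w| <= M).
    near=> M => w Sw /=; rewrite Sw.
    by near: M; exact: nbhs_pinfty_ge.
  have nc : continuous (fun v : 'rV[R]_k.+1 => `|v|) by move=> v; exact: norm_continuous.
  have := (proj1 (continuous_closedP _) nc _ (@closed_eq R 1)).
  move=> h; exact h.
have S0 : S !=set0.
  pose e := (delta_mx 0 0 : 'rV[R]_k.+1).
  have e0 : `|e| != 0.
    rewrite normr_eq0; apply/eqP => /matrixP /(_ 0 0); rewrite !mxE /=.
    by move/eqP; rewrite oner_eq0.
  exists (`|e|^-1 *: e); rewrite /S /= normrZ normrV ?unitfE // normr_id.
  by rewrite mulVf.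
have [c0 /set_mem Sc0 minc] := compact_EVT_min S0 cS (continuous_subspaceT cf).
exists (f c0).
  rewrite lt_neqAle nrm_ge0 andbT eq_sym; apply/eqP => /nrm_eq0 h.
  have : c0 = 0 by rewrite -(trmxK c0) h trmx0.
  by move=> c00; move: Sc0; rewrite /S /= c00 normr0 => /eqP; rewrite eq_sym oner_eq0.
move=> x; have [->|x0] := eqVneq x 0; first by rewrite normr0 mulr0 nrm0.
have nx : 0 < `|x| by rewrite normr_gt0.
have := minc (`|x|^-1 *: x^T).
rewrite /f inE /S /= normrZ normrV ?unitfE ?gt_eqF // normr_id mxnorm_tr.
rewrite mulVf ?gt_eqF // => /(_ erefl).
rewrite linearZ /= trmxK nrmZ normrV ?unitfE ?gt_eqF // normr_id.
by rewrite ler_pdivlMl // mulrC.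
Unshelve. all: by end_near.
Qed.


Lemma mxmul_norm m k p (M : 'M[R]_(m, k)) (x : 'M[R]_(k, p)) :
  `|M *m x| <= k%:R * `|M| * `|x|.
Proof.
apply: mxnorm_le.
  by apply: mulr_ge0; [apply: mulr_ge0|]; rewrite ?ler0n ?normr_ge0.
move=> i j; rewrite mxE; apply: le_trans (ler_norm_sum _ _ _) _.
have -> : k%:R * `|M| * `|x| = \sum_(l < k) (`|M| * `|x|).
  by rewrite sumr_const card_ord -mulrA mulr_natl.
apply: ler_sum => l _; rewrite normrM.
by apply: ler_pM; rewrite ?normr_ge0 ?mxnorm_entry.
Qed.

Lemma ball0 k : @unit_ball R nrm k 0.
Proof. by rewrite /unit_ball /= nrm0. Qed.

Lemma op_bounded m k (M : 'M[R]_(m, k)) :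
  has_ubound [set nrm m (M *m x) | x in @unit_ball R nrm k].
Proof.
have [c c0 hc] := nrm_low k.
exists (Cup m * (k%:R * `|M| * c^-1)) => _ [x bx <-].
apply: le_trans (nrm_upN _) _; apply: ler_wpM2l; first exact: Cup_ge0.
apply: le_trans (mxmul_norm _ _) _; apply: ler_wpM2l.
  by apply: mulr_ge0; rewrite ?ler0n ?normr_ge0.
rewrite -(ler_pM2l c0) mulfV ?gt_eqF //; apply: le_trans (hc x) _; exact: bx.
Qed.

Lemma opnorm_ge0 m k (M : 'M[R]_(m, k)) : 0 <= opnorm nrm M.
Proof.
apply: le_trans (ub_le_sup (op_bounded M) _).
  exact: (nrm_ge0 (M *m 0)).
by exists 0 => //; apply: ball0.
Qed.

Lemma opnormP m k (M : 'M[R]_(m, k)) x : nrm m (M *m x) <= opnorm nrm M * nrm k x.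
Proof.
have [->|x0] := eqVneq x 0; first by rewrite mulmx0 !nrm0 mulr0.
have nx : 0 < nrm k x by rewrite lt_neqAle nrm_ge0 andbT eq_sym; apply/eqP => /nrm_eq0; apply/eqP.
have h : @unit_ball R nrm k ((nrm k x)^-1 *: x).
  rewrite /unit_ball /= nrmZ normrV ?unitfE ?gt_eqF // ger0_norm ?nrm_ge0 //.
  by rewrite mulVf ?gt_eqF.
have := ub_le_sup (op_bounded M) (ex_intro2 _ _ _ h erefl).
rewrite -scalemxAr nrmZ normrV ?unitfE ?gt_eqF // ger0_norm ?nrm_ge0 //.
by rewrite ler_pdivrMl // mulrC.
Qed.

Lemma opnorm_ub m k (M : 'M[R]_(m, k)) B :
  0 <= B -> (forall x, nrm m (M *m x) <= B * nrm k x) -> opnorm nrm M <= B.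
Proof.
move=> B0 h; apply: ge_sup; first by exists (nrm m (M *m 0)), 0 => //; apply: ball0.
move=> _ [x bx <-]; apply: le_trans (h x) _.
by rewrite -[leRHS]mulr1; apply: ler_wpM2l.
Qed.


Definition Pk (r : R) (k : nat) : R := \sum_(j < k) r ^+ j / j`!%:R.

Lemma Pk_series r : Pk r = series (exp_coeff r).
Proof.
apply/funext => N; rewrite /series /= /Pk big_mkord; apply: eq_bigr => j _.
by rewrite exp_coeffE /= mulrC.
Qed.

Lemma Pk_cvg r : Pk r N @[N --> \oo] --> expR r.
Proof. rewrite Pk_series; exact: is_cvg_series_exp_coeff. Qed.

Lemma Pk_le r k : 0 <= r -> Pk r k <= expR r.
Proof.
move=> r0; rewrite Pk_series; apply: nondecreasing_cvgn_le.
  by apply: nondecreasing_series => j _ _; apply: exp_coeff_ge0.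
exact: is_cvg_series_exp_coeff.
Qed.

Lemma Pk_mono r k l : 0 <= r -> (k <= l)%N -> Pk r k <= Pk r l.
Proof.
move=> r0 kl; rewrite Pk_series; apply: nondecreasing_series => // j _ _.
exact: exp_coeff_ge0.
Qed.

Lemma theta_eq r k : theta r k = expR r - Pk r k.
Proof.
apply: cvg_lim => //.
apply: cvg_trans; last exact: (cvgB (@Pk_cvg r) (cvg_cst (Pk r k))).
apply: near_eq_cvg; near=> N.
have kN : (k <= N)%N by near: N; exact: nbhs_infty_ge.
transitivity (Pk r N - Pk r k); first by [].
rewrite /Pk -!(big_mkord xpredT (fun j => r ^+ j / j`!%:R)).
by rewrite (@big_cat_nat _ _ _ k 0 N) //= addrC addrK.
Unshelve. all: by end_near.
Qed.


Lemma e_le_Cup k (j : 'I_k) : nrm k (delta_mx j 0) <= Cup k.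
Proof.
rewrite /Cup (bigD1 j) //= lerDl; apply: sumr_ge0 => i _; exact: nrm_ge0.
Qed.

Lemma mx_bound k : exists2 K, 0 <= K & forall (M : 'M[R]_k) B, 0 <= B ->
  (forall y, nrm k (M *m y) <= B * nrm k y) -> `|M| <= K * B.
Proof.
have [c c0 hc] := nrm_low k.
exists (c^-1 * Cup k); first by apply: mulr_ge0; [rewrite invr_ge0 ltW | apply: Cup_ge0].
move=> M B B0 hM; apply: mxnorm_le; first by apply: mulr_ge0 => //; apply: mulr_ge0; [rewrite invr_ge0 ltW | apply: Cup_ge0].
move=> i j.
have -> : M i j = (M *m (delta_mx j (0 : 'I_1) : 'cV[R]_k)) i 0.
  rewrite mxE (bigD1 j) //= mxE !eqxx mulr1 big1 ?addr0 // => l /negbTE ne.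
  by rewrite mxE ne mulr0.
apply: le_trans (mxnorm_entry _ _ _) _.
rewrite -(ler_pM2l c0) mulrA mulrA mulfV ?gt_eqF // mul1r.
apply: le_trans (hc _) _; apply: le_trans (hM _) _.
by rewrite mulrC; apply: ler_wpM2r => //; apply: e_le_Cup.
Qed.

Variables (n : nat) (A : 'M[R]_n) (t : R).
Hypothesis t0 : 0 <= t.

Let r := t * opnorm nrm A.
Lemma r0 : 0 <= r.
Proof. by apply: mulr_ge0 => //; apply: opnorm_ge0. Qed.

Lemma pow_bound j y : nrm n ((t *: A) ^+ j *m y) <= r ^+ j * nrm n y.
Proof.
elim: j => [|j IH]; first by rewrite !expr0 mul1mx mul1r.
rewrite exprS -mulmxE -mulmxA -scalemxAl nrmZ ger0_norm // exprS -mulrA -mulrA.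
apply: ler_wpM2l => //; apply: le_trans (opnormP _ _) _.
by apply: ler_wpM2l => //; apply: opnorm_ge0.
Qed.

Lemma term_bound j y :
  nrm n (((j`!%:R)^-1 *: (t *: A) ^+ j) *m y) <= r ^+ j / j`!%:R * nrm n y.
Proof.
rewrite -scalemxAl nrmZ ger0_norm ?invr_ge0 ?ler0n //.
rewrite (mulrC (r ^+ j)) -mulrA ler_pM2l ?invr_gt0 ?ltr0n ?fact_gt0 //.
exact: pow_bound.
Qed.

Lemma Sdiff k d y : nrm n ((Lpoly A t (k + d) - Lpoly A t k) *m y)
   <= (Pk r (k + d) - Pk r k) * nrm n y.
Proof.
elim: d => [|d IH]; first by rewrite addn0 !subrr mul0mx nrm0 mul0r.
rewrite addnS /Lpoly /Pk !big_ord_recr /= -/(Lpoly A t (k + d)) -/(Pk r (k + d)).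
rewrite addrAC mulmxDl; apply: le_trans (nrmD _ _) _.
rewrite -[X in _ <= X * _]addrAC mulrDl; apply: lerD => //.
exact: term_bound.
Qed.

Lemma Sbound k y : nrm n (Lpoly A t k *m y) <= Pk r k * nrm n y.
Proof.
have := Sdiff 0 k y; rewrite /Lpoly /Pk !big_ord0 !subr0 add0n //.
Qed.

Lemma S_cvg : cvgn (Lpoly A t).
Proof.
have -> : Lpoly A t = series (fun j => (j`!%:R)^-1 *: (t *: A) ^+ j).
  apply/funext => N; rewrite /series /= /Lpoly big_mkord //.
suff : cvgn [normed series (fun j => (j`!%:R)^-1 *: (t *: A) ^+ j)].
  move=> /cauchy_cvgP/cauchy_seriesP u_ncvg.
  apply/cauchy_cvgP/cauchy_seriesP => e /u_ncvg.
  apply: filterS => N /=; rewrite ger0_norm ?sumr_ge0//.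
  by apply: le_lt_trans; apply: ler_norm_sum.
have [K K0 hK] := mx_bound n.
apply: (@series_le_cvg _ _ (K *: exp_coeff r)).
- by move=> j; rewrite normr_ge0.
- by move=> j; rewrite /= mulr_ge0 // exp_coeff_ge0 // r0.
- move=> j /=; rewrite [X in _ <= X]/= exp_coeffE /=; apply: hK.
    by rewrite mulr_ge0 ?invr_ge0 ?ler0n // exprn_ge0 // r0.
  by move=> y; rewrite (mulrC _ (r ^+ j)); apply: term_bound.
- exact: is_cvg_seriesZ (is_cvg_series_exp_coeff r).
Qed.


Lemma Ediff k y : nrm n ((expmx (t *: A) - Lpoly A t k) *m y)
   <= (expR r - Pk r k) * nrm n y.
Proof.
have hE : Lpoly A t N @[N --> \oo] --> expmx (t *: A) := S_cvg.
set E := expmx (t *: A).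
apply/ler_addgt0Pr => e e0.
set D := Cup n * n%:R * `|y| + 1.
have D0 : 0 < D.
  rewrite /D; have : 0 <= Cup n * n%:R * `|y|.
    by rewrite !mulr_ge0 ?Cup_ge0 ?ler0n ?normr_ge0.
  lra.
have de0 : 0 < e / D by apply: divr_gt0.
have : \forall N \near \oo, `|E - Lpoly A t N| < e / D /\ (k <= N)%N.
  near=> N; split; [near: N; exact: (cvgr_dist_lt _ _ hE) | near: N; exact: nbhs_infty_ge].
move=> /filter_ex [N [hN kN]].
have -> : E - Lpoly A t k = (E - Lpoly A t N) + (Lpoly A t N - Lpoly A t k).
  by rewrite addrA subrK.
rewrite mulmxDl; apply: le_trans (nrmD _ _) _.
rewrite addrC; apply: lerD.
  have := Sdiff k (N - k) y; rewrite subnKC // => h; apply: le_trans h _.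
  apply: ler_wpM2r; first exact: nrm_ge0.
  by apply: lerB => //; apply: Pk_le; apply: r0.
apply: le_trans (nrm_upN _) _.
have h1 := mxmul_norm (E - Lpoly A t N) y.
have h2 : Cup n * `|(E - Lpoly A t N) *m y| <= Cup n * (n%:R * (e / D) * `|y|).
  apply: ler_wpM2l; first exact: Cup_ge0.
  apply: le_trans h1 _; apply: ler_wpM2r; first exact: normr_ge0.
  by apply: ler_wpM2l; rewrite ?ler0n // ltW.
apply: le_trans h2 _.
have -> : Cup n * (n%:R * (e / D) * `|y|) = (Cup n * n%:R * `|y|) * e / D.
  by rewrite /D; ring.
rewrite ler_pdivrMr // mulrC; apply: ler_wpM2l; first exact: ltW.
rewrite /D; lra.
Unshelve. all: by end_near.
Qed.


Lemma Lbound k y : nrm n (Lpoly A t k *m y) <= expR r * nrm n y.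
Proof.
apply: le_trans (Sbound k y) _; apply: ler_wpM2r; first exact: nrm_ge0.
apply: Pk_le; exact: r0.
Qed.


Lemma theta_ge0 (s : R) k : 0 <= s -> 0 <= theta s k.
Proof. by move=> s0; rewrite theta_eq subr_ge0 Pk_le. Qed.

Lemma theta_small (s : R) k : 0 <= s -> (2 <= k)%N ->
  theta s k <= s ^+ 2 * expR s.
Proof.
move=> s0 k2; rewrite theta_eq.
have h2 : Pk s 2 <= Pk s k by apply: Pk_mono.
have e2 : Pk s 2 = 1 + s by rewrite /Pk !big_ord_recr big_ord0 /= expr0 expr1 !divr1 add0r.
rewrite e2 in h2.
have h := expR_ge1Dx (- s); rewrite expRN in h.
have X0 : 0 < expR s := expR_gt0 s.
have h' : (1 - s) * expR s <= 1.
  have Xn : expR s != 0 by rewrite gt_eqF.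
  by rewrite -[leRHS](mulVf Xn); apply: ler_wpM2r; [exact: ltW | exact: h].
nra.
Qed.

Lemma nat_minP (P : set nat) : (exists k, P k) ->
  P (nat_min P) /\ forall j, P j -> (nat_min P <= j)%N.
Proof.
move=> ex; rewrite /nat_min; case: xgetP => [x _ [] //|H].
exfalso.
have ex' : exists k, `[< P k >] by case: ex => k Pk; exists k; apply/asboolP.
case: (ex_minnP ex') => m /asboolP Pm mmin.
apply: (H m); split => // j Pj; apply: mmin; exact/asboolP.
Qed.

Lemma hdist_le m (X Y : set 'cV[R]_m) D :
  (exists x, X x) -> (exists y, Y y) ->
  (forall x, X x -> exists2 y, Y y & nrm m (x - y) <= D) ->
  (forall y, Y y -> exists2 x, X x & nrm m (x - y) <= D) ->
  hdist nrm X Y <= D.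
Proof.
move=> [x0 Xx0] [y0 Yy0] hX hY; rewrite /hdist ge_max; apply/andP; split.
- apply: ge_sup; first by eexists; exists x0.
  move=> _ [x Xx <-]; have [y Yy hxy] := hX x Xx.
  apply: le_trans hxy; apply: ge_inf; last by exists y.
  by exists 0 => _ [z _ <-]; apply: nrm_ge0.
- apply: ge_sup; first by eexists; exists y0.
  move=> _ [y Yy <-]; have [x Xx hxy] := hY y Yy.
  apply: le_trans hxy; apply: ge_inf; last by exists x.
  by exists 0 => _ [z _ <-]; apply: nrm_ge0.
Qed.


Lemma kappa_spec p (c : 'cV[R]_n) (G : 'M[R]_(n, p)) (Gd : 'M[R]_(p, n)) eps :
  0 <= eps -> eps < 1 ->
  (2 <= kappa nrm A c G Gd t eps)%N /\
  eps < lambda nrm A c G Gd t (kappa nrm A c G Gd t eps).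
Proof.
move=> e0 e1.
have er0 : 0 < expR r := expR_gt0 r.
have g0 := opnorm_ge0 Gd; have G0 := opnorm_ge0 G; have c0 := nrm_ge0 c.
set X := expR r * opnorm nrm Gd * nrm n c.
set Y := expR r * opnorm nrm Gd * opnorm nrm G.
have X0 : 0 <= X by rewrite /X !mulr_ge0 // ltW.
have Y0 : 0 <= Y by rewrite /Y !mulr_ge0 // ltW.
have XY0 : 0 < X + Y + 1 by lra.
set d := (1 - eps) / (X + Y + 1).
have d0 : 0 < d by apply: divr_gt0 => //; lra.
have dXY : d * (X + Y + 1) = 1 - eps by rewrite /d mulfVK // gt_eqF.
have ex : exists k, (maxn (kmin A t) 2 <= k)%N /\ eps < lambda nrm A c G Gd t k.
  have : \forall k \near \oo, `|expR r - Pk r k| < d /\ (maxn (kmin A t) 2 <= k)%N.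
    have hP := (proj1 (cvgrPdist_lt _ _) (@Pk_cvg r)) d d0.
    near=> k; split; [near: k; exact: hP |
                      near: k; exact: nbhs_infty_ge].
  move=> /filter_ex [k [hk kk]]; exists k; split => //.
  have th0 := theta_ge0 k r0.
  have thd : theta r k < d.
    by rewrite theta_eq; apply: le_lt_trans hk; apply: ler_norm.
  rewrite /lambda /=; rewrite -/r.
  set th := theta r k in th0 thd *.
  have eX : expR r * th * opnorm nrm Gd * nrm n c = th * X by rewrite /X; ring.
  have eY : expR r * th * opnorm nrm Gd * opnorm nrm G = th * Y by rewrite /Y; ring.
  rewrite eX eY ltr_pdivlMr; last by have := mulr_ge0 th0 Y0; lra.
  have h1 : th * (X + Y + 1) < d * (X + Y + 1) by rewrite ltr_pM2r.
  have h2 : eps * (th * Y) <= th * Y by apply: ler_piMl; [apply: mulr_ge0 | apply: ltW].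
  have h3 : 0 <= th * X by apply: mulr_ge0.
  have h4 : 0 <= th * Y by apply: mulr_ge0.
  nra.
have [h1 h2] := nat_minP ex.
rewrite /kappa; split; last exact: h1.2.
by apply: leq_trans (leq_maxr _ _) h1.1.
Unshelve. all: by end_near.
Qed.


Lemma zmod_id (V : zmodType) (u v w z lv : V) :
  (u + lv) - (w + z) = ((u + v) - (w + z)) + (lv - v).
Proof. by rewrite [RHS]addrAC -[u + v + _]addrA (addrC v) subrK. Qed.

Lemma main_sec p (T : R) (c : 'cV[R]_n) (G : 'M[R]_(n, p)) (Gd : 'M[R]_(p, n)) eps :
  0 <= eps -> eps < 1 -> t <= T ->
  hdist nrm (Hset nrm A c G Gd t eps) (mximage (expmx (t *: A)) (zono nrm c G))
  <= (2 * (1 - eps) + (t * opnorm nrm A) ^+ 2) * expR (T * opnorm nrm A)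
     * setnorm nrm (zono nrm c G).
Proof.
move=> e0 e1 tT.
have [k2 lgt] := kappa_spec c G Gd e0 e1.
rewrite /Hset /=.
set k := kappa nrm A c G Gd t eps in k2 lgt *.
set lam := lambda nrm A c G Gd t k in lgt *.
have er0 : 0 < expR r := expR_gt0 r.
have g0 := opnorm_ge0 Gd; have G0 := opnorm_ge0 G; have c0 := nrm_ge0 c.
have th0 := theta_ge0 k r0.
have lam1 : lam <= 1.
  rewrite /lam /lambda /= -/r.
  set th := theta r k in th0 *.
  have hX : 0 <= expR r * th * opnorm nrm Gd * nrm n c by rewrite !mulr_ge0 // ltW.
  have hY : 0 <= expR r * th * opnorm nrm Gd * opnorm nrm G by rewrite !mulr_ge0 // ltW.
  rewrite ler_pdivrMr; last lra.
  lra.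
set S := setnorm nrm (zono nrm c G).
have Sub : has_ubound [set nrm n x | x in zono nrm c G].
  exists (nrm n c + opnorm nrm G) => _ [_ [b bb <-] <-].
  apply: le_trans (nrmD _ _) _; rewrite lerD2l.
  apply: le_trans (opnormP _ _) _.
  by rewrite -[leRHS]mulr1; apply: ler_wpM2l.
have Sb b : unit_ball nrm b -> nrm n (c + G *m b) <= S.
  move=> bb; rewrite /S /setnorm; apply: (ub_le_sup Sub).
  by exists (c + G *m b) => //; exists b.
have S0 : 0 <= S.
  apply: le_trans (Sb 0 (ball0 p)); exact: nrm_ge0.
have Gb b : unit_ball nrm b -> nrm n (G *m b) <= S.
  move=> bb.
  have bb' : unit_ball nrm (- b) by rewrite /unit_ball /= nrmN.
  have e2 : (c + G *m b) - (c + G *m (- b)) = 2%:R *: (G *m b).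
    by rewrite mulmxN opprD opprK addrACA subrr add0r scaler_nat mulr2n.
  have := nrmB (c + G *m b) (c + G *m (- b)); rewrite e2 nrmZ ger0_norm // => h.
  have := Sb _ bb; have := Sb _ bb'; lra.
set L := Lpoly A t k.
set E := expmx (t *: A).
have core b : unit_ball nrm b ->
  nrm n (L *m (c + (lam *: G) *m b) - E *m (c + G *m b))
  <= (2 * (1 - eps) + (t * opnorm nrm A) ^+ 2) * expR (T * opnorm nrm A) * S.
  move=> bb.
  rewrite !mulmxDr -scalemxAl -scalemxAr (zmod_id _ (L *m (G *m b))).
  rewrite -!mulmxDr -mulmxBl.
  apply: le_trans (nrmD _ _) _.
  have h1 : nrm n ((L - E) *m (c + G *m b)) <= r ^+ 2 * expR r * S.
    rewrite -opprB mulNmx nrmN.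
    apply: le_trans (Ediff _ _) _.
    rewrite -theta_eq; apply: ler_pM => //; first exact: nrm_ge0.
      by apply: theta_small => //; apply: r0.
    exact: Sb.
  have h2 : nrm n (lam *: (L *m (G *m b)) - L *m (G *m b)) <= (1 - eps) * expR r * S.
    rewrite -[X in _ - X]scale1r -scalerBl nrmZ ler0_norm; last lra.
    rewrite -mulrA; apply: ler_pM; [lra | exact: nrm_ge0 | lra |].
    apply: le_trans (Lbound _ _) _; apply: ler_wpM2l; [exact: ltW | exact: Gb].
  have eT : expR r <= expR (T * opnorm nrm A).
    by rewrite ler_expR; apply: ler_wpM2r; [exact: opnorm_ge0 |].
  have r2 : 0 <= r ^+ 2 by apply: exprn_ge0; apply: r0.
  rewrite -/r.
  have h3 : r ^+ 2 * expR r * S + (1 - eps) * expR r * S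
            = (r ^+ 2 + (1 - eps)) * (expR r * S) by ring.
  apply: le_trans (lerD h1 h2) _; rewrite h3 -mulrA.
  apply: ler_pM; [lra | by rewrite mulr_ge0 // ltW | lra |].
  by apply: ler_wpM2r.
apply: hdist_le.
- exists (L *m (c + (lam *: G) *m 0)); exists (c + (lam *: G) *m 0) => //.
  by exists 0 => //; apply: ball0.
- exists (E *m (c + G *m 0)); exists (c + G *m 0) => //.
  by exists 0 => //; apply: ball0.
- move=> _ [_ [b bb <-] <-]; exists (E *m (c + G *m b)); last exact: core.
  by exists (c + G *m b) => //; exists b.
- move=> _ [_ [b bb <-] <-]; exists (L *m (c + (lam *: G) *m b)); last exact: core.
  by exists (c + (lam *: G) *m b) => //; exists b.
Qed.

End Basic.

Theorem lemma12 (R : realType) (nrm : forall k, 'cV[R]_k -> R)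
    (n p : nat) (A : 'M[R]_n) (T : R) (c : 'cV[R]_n) (G : 'M[R]_(n, p))
    (Gd : 'M[R]_(p, n)) (eps t : R) :
  norm_family nrm ->
  0 < T ->
  \rank G = n ->
  is_MP_inverse G Gd ->
  0 <= eps -> eps < 1 ->
  0 <= t -> t <= T ->
  t * opnorm nrm A <= 1 ->
  hdist nrm (Hset nrm A c G Gd t eps) (mximage (expmx (t *: A)) (zono nrm c G))
  <= (2 * (1 - eps) + (t * opnorm nrm A) ^+ 2) * expR (T * opnorm nrm A)
     * setnorm nrm (zono nrm c G).
Proof.
move=> Hn T0 rk MP e0 e1 t0 tT ta1.
exact: (@main_sec R nrm Hn n A t t0 p T c G Gd eps e0 e1 tT).
Qed.
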